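(* Let $G=(V,E)$ be a simple undirected graph with $V=[n]$ and let $k\ge1$ be an integer. Let $Y\in\mathbb S^{nk}$, viewed as a $k\times k$ array of $n\times n$ blocks $Y^{rl}$ ($r,l\in[k]$), satisfy $Y^{rr}_{ij}=0$ for all $\{i,j\}\in E$, $r\in[k]$; $Y^{rl}_{ii}=0$ for all $i\in[n]$, $r,l\in[k]$, $r\ne l$; $Y\ge0$ entrywise; and $\begin{bmatrix}1&\mathrm{diag}(Y)^{\top}\\ \mathrm{diag}(Y)&Y\end{bmatrix}\succeq0$. Then $\sum_{r\in[k]}Y^{rr}_{ii}\le 1$ for every $i\in[n]$.
   Context: $\mathbb S^m$ denotes real symmetric $m\times m$ matrices; $\mathrm{diag}(Y)$ is the vector of diagonal entries; $\succeq0$ is positive semidefiniteness. *)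

(* Defs.v *)
From mathcomp Require Import all_boot all_order all_algebra.
Set Implicit Arguments. Unset Strict Implicit. Unset Printing Implicit Defensive.
Import Order.TTheory GRing.Theory Num.Theory.
Local Open Scope ring_scope.

Definition psd (R : realFieldType) (m : nat) (A : 'M[R]_m) : Prop :=
  A^T = A /\ forall x : 'cV[R]_m, 0 <= (x^T *m A *m x) 0 0.

(* Index of entry i of block r in an (k*n)-vector: r*n + i. *)
Definition bidx (k n : nat) (r : 'I_k) (i : 'I_n) : 'I_(k * n) := mxvec_index r i.

Definition diag_row (R : realFieldType) (m : nat) (Y : 'M[R]_m) : 'rV[R]_m :=
  \row_p Y p p.

Definition bordered (R : realFieldType) (m : nat) (Y : 'M[R]_m) : 'M[R]_(1 + m) :=
  block_mx (1%:M : 'M[R]_1) (diag_row Y) (diag_row Y)^T Y.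

(* Main.v *)
Require Import Defs.
From mathcomp Require Import all_boot all_order all_algebra.
From mathcomp Require Import ring lra.
Import Order.TTheory GRing.Theory Num.Theory.
Local Open Scope ring_scope.

Lemma quad_sum (R : realFieldType) m (A : 'M[R]_m) (x : 'cV[R]_m) :
  (x^T *m A *m x) 0 0 = \sum_l \sum_j x l 0 * A l j * x j 0.
Proof.
rewrite mxE exchange_big /=; apply: eq_bigr => j _.
rewrite mxE mulr_suml; apply: eq_bigr => l _; by rewrite mxE.
Qed.

Theorem lemma1 (R : realFieldType) (n k : nat) (e : rel 'I_n)
  (e_sym : symmetric e) (e_irr : irreflexive e) (k_ge1 : (1 <= k)%N)
  (Y : 'M[R]_(k * n))
  (Ysym : Y^T = Y)
  (Yedge : forall (i j : 'I_n) (r : 'I_k), e i j -> Y (bidx r i) (bidx r j) = 0)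
  (Ydiag : forall (i : 'I_n) (r l : 'I_k), r != l -> Y (bidx r i) (bidx l i) = 0)
  (Ynneg : forall p q, 0 <= Y p q)
  (Ypsd : psd (bordered Y)) :
  forall i : 'I_n, \sum_(r < k) Y (bidx r i) (bidx r i) <= 1.
Proof.
move=> i.
set s := \sum_(r < k) _.
pose v : 'cV[R]_(k * n) := \col_p \sum_(r < k) ((p == bidx r i)%:R : R).
have sumv : forall f : 'I_(k * n) -> R, \sum_p v p 0 * f p = \sum_(r < k) f (bidx r i).
  move=> f; under eq_bigr do rewrite mxE mulr_suml.
  rewrite exchange_big /=; apply: eq_bigr => r _.
  rewrite (bigD1 (bidx r i)) //= eqxx mul1r big1 ?addr0 // => p /negbTE ->.
  by rewrite mul0r.
pose x : 'cV[R]_(1 + k * n) := col_mx (s%:M) (- v).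
have H := Ypsd.2 x.
rewrite quad_sum big_split_ord big_ord1 /= big_split_ord big_ord1 /= in H.
have B00 : bordered Y (lshift (k*n) ord0) (lshift (k*n) ord0) = 1.
  by rewrite /bordered block_mxEul mxE.
have B0j : forall j, bordered Y (lshift (k*n) ord0) (rshift 1 j) = Y j j.
  by move=> j; rewrite /bordered block_mxEur mxE.
have Bj0 : forall j, bordered Y (rshift 1 j) (lshift (k*n) ord0) = Y j j.
  by move=> j; rewrite /bordered block_mxEdl !mxE.
have Bjl : forall j l, bordered Y (rshift 1 j) (rshift 1 l) = Y j l.
  by move=> j l; rewrite /bordered block_mxEdr.
have X0 : x (lshift (k*n) ord0) 0 = s by rewrite /x col_mxEu mxE.
have Xj : forall j, x (rshift 1 j) 0 = - v j 0 by move=> j; rewrite /x col_mxEd mxE.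
have sY : \sum_(j < k*n) v j 0 * Y j j = s by rewrite sumv.
have S1 : \sum_(j < k*n) x (lshift (k*n) ord0) 0 * bordered Y (lshift (k*n) ord0) (rshift 1 j) * x (rshift 1 j) 0 = - s * s.
  under eq_bigr do rewrite B0j Xj X0.
  transitivity (- s * \sum_(j < k*n) v j 0 * Y j j); last by rewrite sY.
  rewrite mulr_sumr; apply: eq_bigr => j _; ring.
have S2 : \sum_(j < k*n) \sum_(l < 1 + k*n) x (rshift 1 j) 0 * bordered Y (rshift 1 j) l * x l 0 = - s * s + s.
  under eq_bigr do rewrite big_split_ord big_ord1 /= Bj0 X0 Xj.
  rewrite big_split /=.
  congr (_ + _).
    transitivity (- s * \sum_(j < k*n) v j 0 * Y j j); last by rewrite sY.
  rewrite mulr_sumr; apply: eq_bigr => j _; ring.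
  transitivity (\sum_(j < k*n) v j 0 * \sum_(l < k*n) v l 0 * Y j l).
    apply: eq_bigr => j _; rewrite mulr_sumr; apply: eq_bigr => l _.
    rewrite Bjl Xj; ring.
  under eq_bigr do rewrite sumv.
  rewrite sumv; apply: eq_bigr => r _.
  rewrite (bigD1 r) //= big1 ?addr0 // => l /negbTE lr.
  by apply: Ydiag; rewrite eq_sym lr.
rewrite S1 S2 B00 X0 in H.
have s0 : 0 <= s by apply: sumr_ge0 => r _; apply: Ynneg.
nra.
Qed.
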